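(* Let $K\ge1$, $A=\{1,\dots,K\}$, let $d\ge1$ be an integer and $\eta>0$ with $\eta\le \frac{1}{Ke(d+1)}$. Consider the exponentially weighted update: $w_1(i)=1$, $W_t=\sum_{j\in A}w_t(j)$, $p_t(i)=w_t(i)/W_t$, $w_{t+1}(i)=p_t(i)\exp(-\eta\widehat{\ell}_t(i))$, where the loss estimates have the form $$\widehat{\ell}_t(i)=\begin{cases}\dfrac{\ell_{t-d}(i)}{q_{t-d}(i)}\,B_{t-d}(i) & \text{if } t>d,\\[2mm] 0&\text{otherwise,}\end{cases}$$ with $\ell_s(i)\in[0,1]$, $B_s(i)\in\{0,1\}$, and $q_s(i)$ numbers satisfying $q_s(i)\ge p_s(i)>0$ for all $s\ge1$, $i\in A$. Then for all $t\ge1$ and all $i\in A$, $$p_{t+1}(i)\le\Bigl(1+\frac1d\Bigr)p_t(i).$$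
   Context: The statement holds deterministically, for every realization of the $\ell_s,B_s,q_s$ satisfying the stated conditions. *)

(* Defs.v *)
From Stdlib Require Import Reals Lra Lia Arith List.
Open Scope R_scope.

Definition sumA (K : nat) (f : nat -> R) : R :=
  fold_right Rplus 0 (map f (seq 1 K)).

Definition lhat (d : nat) (l B q : nat -> nat -> R) (t i : nat) : R :=
  if Nat.ltb d t then l (t - d)%nat i / q (t - d)%nat i * B (t - d)%nat i else 0.

(* Weights w_t(i) for t >= 1 (the value at t = 0 is an unused junk value 1):
   w_1(i) = 1,  w_{t+1}(i) = p_t(i) * exp(-eta * lhat_t(i)),
   with p_t(i) = w_t(i) / W_t and W_t = sum_{j in A} w_t(j). *)
Fixpoint w (K : nat) (eta : R) (d : nat) (l B q : nat -> nat -> R) (t : nat)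
  : nat -> R :=
  match t with
  | S ((S _) as m) => fun i =>
      (w K eta d l B q m i / sumA K (w K eta d l B q m))
        * exp (- eta * lhat d l B q m i)
  | _ => fun _ => 1
  end.

Definition Wt (K : nat) (eta : R) (d : nat) (l B q : nat -> nat -> R) (t : nat) : R :=
  sumA K (w K eta d l B q t).

Definition p (K : nat) (eta : R) (d : nat) (l B q : nat -> nat -> R) (t i : nat) : R :=
  w K eta d l B q t i / Wt K eta d l B q t.

(* Main.v *)
Require Import Defs.
From Stdlib Require Import Reals Lra Lia Arith List.
Open Scope R_scope.

Lemma fr_le (f g : nat -> R) (s : list nat) :
  (forall j, In j s -> f j <= g j) ->
  fold_right Rplus 0 (map f s) <= fold_right Rplus 0 (map g s).
Proof.
  induction s as [|a s IH]; intros H; simpl; [lra|].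
  apply Rplus_le_compat; [apply H; simpl; auto|apply IH; intros; apply H; simpl; auto].
Qed.

Lemma sumA_le K f g : (forall j, (1 <= j <= K)%nat -> f j <= g j) -> sumA K f <= sumA K g.
Proof.
  intros H; apply fr_le; intros j Hj; apply in_seq in Hj; apply H; lia.
Qed.

Lemma sumA_ext K f g : (forall j, (1 <= j <= K)%nat -> f j = g j) -> sumA K f = sumA K g.
Proof.
  intros H; apply Rle_antisym; apply sumA_le; intros j Hj; rewrite H; auto; lra.
Qed.

Lemma fr_div (f : nat -> R) c s :
  fold_right Rplus 0 (map (fun j => f j / c) s) = fold_right Rplus 0 (map f s) / c.
Proof. induction s; simpl; [unfold Rdiv; ring|rewrite IHs; unfold Rdiv; ring]. Qed.

Lemma sumA_div K f c : sumA K (fun j => f j / c) = sumA K f / c.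
Proof. apply fr_div. Qed.

Lemma fr_lin (f g : nat -> R) a s :
  fold_right Rplus 0 (map (fun j => f j * (1 - a * g j)) s) =
  fold_right Rplus 0 (map f s) - a * fold_right Rplus 0 (map (fun j => f j * g j) s).
Proof. induction s; simpl; [ring|rewrite IHs; ring]. Qed.

Lemma sumA_lin K f g a : sumA K (fun j => f j * (1 - a * g j)) =
  sumA K f - a * sumA K (fun j => f j * g j).
Proof. apply fr_lin. Qed.

Lemma fr_const c s n : fold_right Rplus 0 (map (fun _ => c) (seq s n)) = INR n * c.
Proof. revert s; induction n; intros s; [simpl; ring|]. rewrite S_INR. simpl. rewrite IHn. ring. Qed.

Lemma sumA_pos K f : (1 <= K)%nat -> (forall j, (1 <= j <= K)%nat -> 0 < f j) -> 0 < sumA K f.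
Proof.
  intros HK H. destruct K as [|K]; [lia|].
  unfold sumA. simpl.
  assert (0 <= fold_right Rplus 0 (map f (seq 2 K))).
  { assert (E : fold_right Rplus 0 (map (fun _ => 0) (seq 2 K)) = 0) by (rewrite fr_const; ring).
    rewrite <- E at 1. apply fr_le. intros j Hj; apply in_seq in Hj. apply Rlt_le, H; lia. }
  assert (0 < f 1%nat) by (apply H; lia). lra.
Qed.

Lemma w_succ K eta d l B q t i : (1 <= t)%nat ->
  w K eta d l B q (S t) i = p K eta d l B q t i * exp (- eta * lhat d l B q t i).
Proof. intros Ht; destruct t; [lia|reflexivity]. Qed.

Lemma exp_pow x n : exp x ^ n = exp (INR n * x).
Proof.
  induction n; [simpl; rewrite Rmult_0_l, exp_0; ring|].
  change (exp x ^ S n) with (exp x * exp x ^ n).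
  rewrite IHn, <- exp_plus, S_INR. f_equal; ring.
Qed.

Lemma exp_ge x : 1 + x <= exp x.
Proof.
  destruct (Req_dec x 0) as [->|Hx]; [rewrite exp_0; lra|].
  apply Rlt_le, exp_ineq1; auto.
Qed.

Theorem lemma2 (K d : nat) (eta : R) (l B q : nat -> nat -> R)
  (hK : (1 <= K)%nat) (hd : (1 <= d)%nat)
  (heta_pos : 0 < eta)
  (heta_le : eta <= 1 / (INR K * exp 1 * (INR d + 1)))
  (hl : forall s i, (1 <= s)%nat -> (1 <= i <= K)%nat -> 0 <= l s i <= 1)
  (hB : forall s i, (1 <= s)%nat -> (1 <= i <= K)%nat -> B s i = 0 \/ B s i = 1)
  (hq : forall s i, (1 <= s)%nat -> (1 <= i <= K)%nat ->
          p K eta d l B q s i <= q s i /\ 0 < p K eta d l B q s i) :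
  forall t i, (1 <= t)%nat -> (1 <= i <= K)%nat ->
    p K eta d l B q (S t) i <= (1 + 1 / INR d) * p K eta d l B q t i.
Proof.
  set (P := p K eta d l B q).
  set (L := lhat d l B q).
  assert (Hw : forall t i, (1 <= t)%nat -> (1 <= i <= K)%nat -> 0 < w K eta d l B q t i).
  { intros t i Ht Hi. destruct t as [|t]; [lia|]. destruct t as [|t]; [simpl; lra|].
    rewrite w_succ by lia. apply Rmult_lt_0_compat; [apply hq; auto; lia|apply exp_pos]. }
  assert (HW : forall t, (1 <= t)%nat -> 0 < Wt K eta d l B q t).
  { intros t Ht. unfold Wt. apply sumA_pos; auto. }
  assert (Hsum : forall t, (1 <= t)%nat -> sumA K (P t) = 1).
  { intros t Ht. unfold P, p. rewrite sumA_div. specialize (HW t Ht). unfold Wt in *. field. lra. }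
  assert (HdR : 1 <= INR d) by (apply (le_INR 1); lia).
  assert (HL0 : forall t j, (1 <= t)%nat -> (1 <= j <= K)%nat -> 0 <= L t j).
  { intros t j Ht Hj. unfold L, lhat. destruct (Nat.ltb d t) eqn:E; [|lra].
    apply Nat.ltb_lt in E.
    assert (0 < q (t - d)%nat j) by (destruct (hq (t-d)%nat j); try lia; lra).
    destruct (hl (t-d)%nat j); try lia. destruct (hB (t-d)%nat j); try lia;
    unfold Rdiv; apply Rmult_le_pos; try lra; apply Rmult_le_pos; try lra;
    apply Rlt_le, Rinv_0_lt_compat; auto. }
  assert (HLb : forall t j, (d < t)%nat -> (1 <= j <= K)%nat ->
            L t j <= 1 / P (t - d)%nat j).
  { intros t j Ht Hj. unfold L, lhat. replace (Nat.ltb d t) with true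
      by (symmetry; apply Nat.ltb_lt; auto).
    destruct (hq (t-d)%nat j) as [H1 H2]; try lia. fold P in H1, H2.
    destruct (hl (t-d)%nat j); try lia.
    apply Rle_trans with (1 / q (t - d)%nat j).
    - unfold Rdiv. rewrite Rmult_1_l.
      assert (0 < / q (t-d)%nat j) by (apply Rinv_0_lt_compat; lra).
      destruct (hB (t-d)%nat j) as [->| ->]; try lia; nra.
    - unfold Rdiv. rewrite !Rmult_1_l. apply Rinv_le_contravar; auto. }
  assert (Hpow : (1 + 1 / INR d) ^ d <= exp 1).
  { apply Rle_trans with (exp (1 / INR d) ^ d).
    - apply pow_incr. split.
      + assert (0 < 1 / INR d) by (unfold Rdiv; rewrite Rmult_1_l; apply Rinv_0_lt_compat; lra). lra.
      + apply exp_ge.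
    - rewrite exp_pow. right. f_equal. field. lra. }
  assert (Main : forall n t i, (t <= n)%nat -> (1 <= t)%nat -> (1 <= i <= K)%nat ->
            P (S t) i <= (1 + 1 / INR d) * P t i).
  2: { intros t i Ht Hi. apply (Main t); auto. }
  induction n as [|n IH]; intros t i Htn Ht Hi; [lia|].
  set (c := 1 + 1 / INR d).
  assert (Hc : 0 < c) by (unfold c; assert (0 < 1 / INR d) by (unfold Rdiv; rewrite Rmult_1_l; apply Rinv_0_lt_compat; lra); lra).
  assert (Hterm : forall j, (1 <= j <= K)%nat -> P t j * L t j <= exp 1).
  { intros j Hj. destruct (Nat.ltb d t) eqn:E.
    - apply Nat.ltb_lt in E.
      assert (Hchain : forall k, (k <= d)%nat -> P t j <= c ^ k * P (t - k)%nat j).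
      { induction k as [|k IHk]; intros Hk.
        - rewrite Nat.sub_0_r; simpl; lra.
        - assert (IHk' := IHk ltac:(lia)).
          replace (t - k)%nat with (S (t - S k)) in IHk' by lia.
          assert (H := IH (t - S k)%nat j ltac:(lia) ltac:(lia) Hj). fold c in H.
          assert (0 <= c ^ k) by (apply pow_le; lra).
          replace (c ^ S k * P (t - S k)%nat j) with (c ^ k * (c * P (t - S k)%nat j)) by (simpl; ring).
          apply Rle_trans with (c ^ k * P (S (t - S k)) j); auto.
          apply Rmult_le_compat_l; auto. }
      assert (Hp := Hchain d (le_n d)).
      destruct (hq (t-d)%nat j) as [_ Hpd]; try lia. fold P in Hpd.
      destruct (hq t j) as [_ Hpt]; try lia. fold P in Hpt.
      assert (HLb' := HLb t j E Hj).
      apply Rle_trans with (P t j * (1 / P (t - d)%nat j)).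
      + apply Rmult_le_compat_l; lra.
      + apply Rle_trans with (c ^ d). 2: exact Hpow.
        apply (Rmult_le_reg_r (P (t-d)%nat j)); auto.
        unfold Rdiv. rewrite Rmult_1_l, Rmult_assoc, Rinv_l by lra. lra.
    - unfold L, lhat. rewrite E. rewrite Rmult_0_r. apply Rlt_le, exp_pos. }
  set (W1 := Wt K eta d l B q (S t)).
  assert (HW1 : W1 >= 1 - eta * (INR K * exp 1)).
  { unfold W1, Wt.
    rewrite (sumA_ext K _ (fun j => P t j * exp (- eta * L t j)))
      by (intros j Hj; apply w_succ; auto).
    apply Rle_ge, Rle_trans with (sumA K (fun j => P t j * (1 - eta * L t j))).
    - rewrite sumA_lin, Hsum by auto.
      assert (sumA K (fun j => P t j * L t j) <= INR K * exp 1).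
      { unfold sumA. rewrite <- (fr_const (exp 1) 1 K). apply fr_le. intros j Hj; apply in_seq in Hj.
        apply Hterm; lia. }
      nra.
    - apply sumA_le. intros j Hj.
      destruct (hq t j) as [_ Hpt]; try lia. fold P in Hpt.
      apply Rmult_le_compat_l; [lra|].
      assert (H := exp_ge (- eta * L t j)). lra. }
  set (X := eta * (INR K * exp 1)).
  assert (HX : X * (INR d + 1) <= 1).
  { unfold X. assert (0 < INR K) by (apply (lt_INR 0); lia).
    assert (0 < exp 1) by apply exp_pos.
    assert (0 < INR K * exp 1 * (INR d + 1)) by (apply Rmult_lt_0_compat; nra).
    apply (Rmult_le_compat_r (INR K * exp 1 * (INR d + 1))) in heta_le; [|lra].
    unfold Rdiv in heta_le. rewrite Rmult_1_l, Rinv_l in heta_le by lra.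
    rewrite Rmult_assoc. exact heta_le. }
  assert (HcW : c * W1 >= 1).
  { assert (E : c * (1 - X) - 1 = (1 / INR d) * (1 - X * INR d - X)) by (unfold c; field; lra).
    assert (0 <= (1 / INR d) * (1 - X * INR d - X)).
    { apply Rmult_le_pos; [|lra]. unfold Rdiv; rewrite Rmult_1_l; apply Rlt_le, Rinv_0_lt_compat; lra. }
    fold X in HW1. nra. }
  destruct (hq t i) as [_ Hpt]; try lia. fold P in Hpt.
  assert (HW1p : 0 < W1) by (unfold W1; apply HW; lia).
  assert (Hwle : w K eta d l B q (S t) i <= P t i).
  { rewrite w_succ by auto. fold P L.
    assert (exp (- eta * L t i) <= 1).
    { rewrite <- exp_0. destruct (Req_dec (L t i) 0) as [->|];
        [right; f_equal; ring|].
      left; apply exp_increasing. assert (0 <= L t i) by (apply HL0; auto).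
      nra. }
    nra. }
  unfold P at 1, p. fold W1.
  apply (Rmult_le_reg_r W1); auto. unfold Rdiv. rewrite Rmult_assoc, Rinv_l by lra.
  nra.
Qed.
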